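(* Let $H$ be an ASC-hypergraph, $Y\in H$, $Z=\bigcup H\setminus Y$, and let $K$ and $J$ be constructions of $H_Y$ and ${}_Z H$ respectively. Then the continuation $K\ast J=K\cup\{X\cup_H Y\mid X\in J\}$ is a construction of $H$.
   Context: A hypergraph is a finite set $H$ of nonempty subsets of some finite set; its carrier is $\bigcup H$. For a family $F$ and set $Y$, $F_Y=\{X\in F\mid X\subseteq Y\}$, and ${}_Z F=\{X\cap Z\mid X\in F,\ X\cap Z\neq\emptyset\}$. For $X\subseteq\bigcup H$, $X\cup_H Y=X\cup Y$ if $X\cup Y\in H$, and $X\cup_H Y=X$ otherwise. A hypergraph partition of $H$ is a partition $\{H_1,\dots,H_n\}$ ($n\ge0$) of the set $H$ with $\{\bigcup H_1,\dots,\bigcup H_n\}$ a partition of $\bigcup H$; $H$ is connected if it has exactly one hypergraph partition; the finest hypergraph partition is the unique one whose blocks are connected. $H$ is atomic if $\{x\}\in H$ for all $x\in\bigcup H$; saturated if $X_1,X_2\in H$ with $X_1\cap X_2\neq\emptyset$ imply $X_1\cup X_2\in H$. An ASC-hypergraph is one that is atomic, saturated and connected (for such $H$, $H_Y$ and ${}_Z H$ are ASC-hypergraphs). Constructions of an atomic $H$, by induction on $|\bigcup H|$: (0) $\emptyset$ is the only construction of $\emptyset$; (1) if $|\bigcup H|\ge1$, $H$ connected, $x\in\bigcup H$, $K$ a construction of $H_{\bigcup H\setminus\{x\}}$, then $K\cup\{\bigcup H\}$ is a construction of $H$; (2) if $H$ is not connected with finest hypergraph partition $\{H_1,\dots,H_n\}$,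 $n\ge2$, and $K_i$ is a construction of $H_i$, then $K_1\cup\dots\cup K_n$ is a construction of $H$. *)

(* Defs.v *)
From mathcomp Require Import all_boot.
Set Implicit Arguments. Unset Strict Implicit. Unset Printing Implicit Defensive.

Section Hyper.
Variable T : finType.
Implicit Types (H F : {set {set T}}) (X Y Z : {set T}).

Definition hypergraph H : Prop := set0 \notin H.

Definition carrier H : {set T} := \bigcup_(X in H) X.

Definition restr F Y : {set {set T}} := [set X in F | X \subset Y].

Definition trace Z F : {set {set T}} :=
  [set X :&: Z | X in [set X in F | X :&: Z != set0]].

Definition cupH H X Y : {set T} := if X :|: Y \in H then X :|: Y else X.

(* hypergraph partition {H_1,...,H_n} of H: a partition of the set H (blocks
   nonempty, pairwise disjoint, covering H) such that the carriers of the
   blocks form a partition of the carrier of H (distinct blocks have disjoint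
   carriers; they cover carrier H since the blocks cover H). *)
Definition hpartition H (P : {set {set {set T}}}) : Prop :=
  partition P H /\
  (forall Hi Hj, Hi \in P -> Hj \in P -> Hi != Hj ->
     [disjoint carrier Hi & carrier Hj]).

Definition connected H : Prop :=
  exists P, hpartition H P /\ forall Q, hpartition H Q -> Q = P.

Definition finest_hpartition H (P : {set {set {set T}}}) : Prop :=
  hpartition H P /\ forall Hi, Hi \in P -> connected Hi.

Definition atomic H : Prop := forall x, x \in carrier H -> [set x] \in H.

Definition saturated H : Prop :=
  forall X1 X2, X1 \in H -> X2 \in H -> X1 :&: X2 != set0 -> X1 :|: X2 \in H.

Definition ASC H : Prop := hypergraph H /\ atomic H /\ saturated H /\ connected H.

Inductive construction : {set {set T}} -> {set {set T}} -> Prop :=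
| constr0 : construction set0 set0
| constr1 : forall H x K,
    atomic H -> connected H -> x \in carrier H ->
    construction (restr H (carrier H :\ x)) K ->
    construction H (K :|: [set carrier H])
| constr2 : forall H (P : {set {set {set T}}}) (f : {set {set T}} -> {set {set T}}),
    atomic H -> ~ connected H -> finest_hpartition H P -> 2 <= #|P| ->
    (forall Hi, Hi \in P -> construction Hi (f Hi)) ->
    construction H (\bigcup_(Hi in P) f Hi).

End Hyper.

(* Main.v *)
Require Import Defs.
From mathcomp Require Import all_boot.
Set Implicit Arguments. Unset Strict Implicit. Unset Printing Implicit Defensive.

Definition maxe {T : finType} (G : {set {set T}}) : {set {set T}} :=
  [set M | maxset (fun A => A \in G) M].

Lemma maxeP {T : finType} (G : {set {set T}}) M :
  reflect (M \in G /\ forall X, X \in G -> M \subset X -> X = M) (M \in maxe G).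
Proof. by rewrite inE; apply: (iffP maxsetP) => -[h1 h2]; split. Qed.

Lemma maxe_ex {T : finType} (G : {set {set T}}) X :
  X \in G -> exists2 M, M \in maxe G & X \subset M.
Proof. by move=> XG; case: (maxset_exists (P:=fun A => A \in G) XG) => M hM sXM; exists M; rewrite ?inE. Qed.

Lemma sat_max {T : finType} (G : {set {set T}}) M X :
  saturated G -> M \in maxe G -> X \in G -> X :&: M != set0 -> X \subset M.
Proof.
move=> sat /maxeP [MG mx] XG ne.
have U := sat _ _ XG MG ne.
have := mx _ U (subsetUr X M) => e.
by rewrite -e subsetUl.
Qed.

Lemma max_disj {T : finType} (G : {set {set T}}) M M' :
  saturated G -> set0 \notin G -> M \in maxe G -> M' \in maxe G -> M :&: M' != set0 -> M = M'.
Proof.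
move=> sat h0 hM hM' ne.
have [MG _] := maxeP _ _ hM. have [M'G _] := maxeP _ _ hM'.
have s1 := sat_max sat hM' MG ne.
have s2 : M' \subset M by apply: (sat_max sat hM M'G); rewrite setIC.
by apply/eqP; rewrite eqEsubset s1 s2.
Qed.

Lemma in_carrier {T : finType} (G : {set {set T}}) X :
  X \in G -> X \subset carrier G.
Proof. by move=> XG; apply: (bigcup_sup X XG). Qed.

Lemma carrierP {T : finType} (G : {set {set T}}) x :
  reflect (exists2 X, X \in G & x \in X) (x \in carrier G).
Proof. exact: bigcupP. Qed.

Lemma carrier_sub {T : finType} (G : {set {set T}}) (A : {set T}) :
  (forall X, X \in G -> X \subset A) -> carrier G \subset A.
Proof. by move=> h; apply/bigcupsP. Qed.

Lemma carrierS {T : finType} (F G : {set {set T}}) :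
  F \subset G -> carrier F \subset carrier G.
Proof. move=> sFG; apply: carrier_sub => X XF; apply: in_carrier; exact: (subsetP sFG). Qed.

Lemma ne_mem {T : finType} (A : {set T}) : A != set0 -> exists x, x \in A.
Proof. by case/set0Pn => x; exists x. Qed.

Lemma nonempty_of_notin {T : finType} (G : {set {set T}}) X :
  set0 \notin G -> X \in G -> X != set0.
Proof. by move=> h XG; apply: contraNneq h => <-. Qed.

Lemma restrE {T : finType} (G : {set {set T}}) (A X : {set T}) :
  (X \in restr G A) = (X \in G) && (X \subset A).
Proof. by rewrite inE. Qed.

Lemma restr_restr {T : finType} (G : {set {set T}}) (A Y : {set T}) :
  Y \subset A -> restr (restr G A) Y = restr G Y.
Proof.
move=> sYA; apply/setP => X; rewrite !restrE -andbA; case XY: (X \subset Y); rewrite ?andbF //.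
by rewrite (subset_trans XY sYA) andbT.
Qed.

Lemma restr_sub {T : finType} (G : {set {set T}}) (A : {set T}) :
  restr G A \subset G.
Proof. by apply/subsetP => X; rewrite restrE => /andP[]. Qed.

Lemma carrier_restr {T : finType} (G : {set {set T}}) (A : {set T}) :
  atomic G -> carrier (restr G A) = A :&: carrier G.
Proof.
move=> hat; apply/eqP; rewrite eqEsubset; apply/andP; split.
  apply: carrier_sub => X; rewrite restrE => /andP[XG XA].
  by rewrite subsetI XA in_carrier.
apply/subsetP => x; rewrite inE => /andP[xA xC].
apply/carrierP; exists [set x]; last by rewrite inE.
by rewrite restrE hat // sub1set.
Qed.

Lemma carrier_restr_sub {T : finType} (G : {set {set T}}) (A : {set T}) :
  carrier (restr G A) \subset A.
Proof. by apply: carrier_sub => X; rewrite restrE => /andP[]. Qed.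

Lemma atomic_restr {T : finType} (G : {set {set T}}) (A : {set T}) :
  atomic G -> atomic (restr G A).
Proof.
move=> hat x; rewrite carrier_restr // inE => /andP[xA xC].
by rewrite restrE hat // sub1set.
Qed.

Lemma sat_restr {T : finType} (G : {set {set T}}) (A : {set T}) :
  saturated G -> saturated (restr G A).
Proof.
move=> sat X1 X2; rewrite !restrE => /andP[h1 s1] /andP[h2 s2] ne.
by rewrite sat // subUset s1 s2.
Qed.

Lemma h0_restr {T : finType} (G : {set {set T}}) (A : {set T}) :
  set0 \notin G -> set0 \notin restr G A.
Proof. by move=> h; rewrite restrE negb_and h. Qed.

Lemma traceP {T : finType} (G : {set {set T}}) (Z W : {set T}) :
  reflect (exists2 X, X \in G & (X :&: Z != set0) && (W == X :&: Z)) (W \in trace Z G).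
Proof.
apply: (iffP imsetP) => [[X]|[X XG /andP[ne /eqP ->]]].
  by rewrite inE => /andP[XG ne] ->; exists X => //; rewrite ne eqxx.
by exists X => //; rewrite inE XG.
Qed.

Lemma h0_trace {T : finType} (G : {set {set T}}) (Z : {set T}) :
  set0 \notin trace Z G.
Proof. by apply/traceP => -[X _ /andP[ne /eqP e]]; move: ne; rewrite -e eqxx. Qed.

Lemma sat_trace {T : finType} (G : {set {set T}}) (Z : {set T}) :
  saturated G -> saturated (trace Z G).
Proof.
move=> sat W1 W2 /traceP[X1 X1G /andP[n1 /eqP->]] /traceP[X2 X2G /andP[n2 /eqP->]] ne.
apply/traceP; exists (X1 :|: X2).
  apply: sat => //; apply: contraNneq ne => e.
  by rewrite setIACA e set0I.
rewrite setIUl eqxx andbT; case/set0Pn: n1 => x hx; apply/set0Pn; exists x; by rewrite inE hx.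
Qed.

Lemma trace_set0 {T : finType} (G : {set {set T}}) : trace set0 G = set0.
Proof.
by apply/setP => W; rewrite inE; apply/traceP => -[X _ /andP[]]; rewrite setI0 eqxx.
Qed.

Lemma carrier_trace_sub {T : finType} (G : {set {set T}}) (Z : {set T}) :
  carrier (trace Z G) \subset Z.
Proof. by apply: carrier_sub => W /traceP[X _ /andP[_ /eqP->]]; rewrite subsetIr. Qed.

Lemma coverP {T : finType} (P : {set {set {set T}}}) X :
  reflect (exists2 B, B \in P & X \in B) (X \in cover P).
Proof. exact: bigcupP. Qed.

Lemma hpart_block {T : finType} (G : {set {set T}}) P X :
  hpartition G P -> X \in G -> exists2 B, B \in P & X \in B.
Proof. by case=> /and3P[/eqP cP _ _] _ XG; apply/coverP; rewrite cP. Qed.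

Lemma hpart_sub {T : finType} (G : {set {set T}}) P B :
  hpartition G P -> B \in P -> B \subset G.
Proof.
case=> /and3P[/eqP cP _ _] _ BP; apply/subsetP => X XB.
by rewrite -cP; apply/coverP; exists B.
Qed.

Lemma hpart_ne {T : finType} (G : {set {set T}}) P B :
  hpartition G P -> B \in P -> B != set0.
Proof. by case=> /and3P[_ _ h0] _ BP; apply: contraNneq h0 => <-. Qed.

Lemma hpart_same {T : finType} (G : {set {set T}}) P B B' X X' :
  set0 \notin G -> hpartition G P -> B \in P -> B' \in P -> X \in B -> X' \in B' ->
  X :&: X' != set0 -> B = B'.
Proof.
move=> h0 hP BP B'P XB X'B' ne; case: (eqVneq B B') => // nB; exfalso.
have := hP.2 _ _ BP B'P nB; rewrite -setI_eq0 => /eqP dis.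
case/set0Pn: ne => x; rewrite inE => /andP[xX xX'].
have : x \in carrier B :&: carrier B'.
  by rewrite inE (subsetP (in_carrier XB)) // (subsetP (in_carrier X'B')).
by rewrite dis inE.
Qed.

Lemma hpart_one {T : finType} (G : {set {set T}}) :
  G != set0 -> hpartition G [set G].
Proof.
move=> ne; split.
  by rewrite /partition cover1 eqxx trivIset1 inE eq_sym ne.
by move=> Hi Hj; rewrite !inE => /eqP-> /eqP->; rewrite eqxx.
Qed.

Lemma Conn {T : finType} (G : {set {set T}}) :
  set0 \notin G -> carrier G \in G -> connected G.
Proof.
move=> h0 CG; have neG : G != set0 by apply/set0Pn; exists (carrier G).
exists [set G]; split; first exact: hpart_one.
move=> Q hQ; have [B BQ CB] := hpart_block hQ CG.
have allB : forall B', B' \in Q -> B' = B.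
  move=> B' B'Q; have /set0Pn [X XB'] := hpart_ne hQ B'Q.
  have XG := subsetP (hpart_sub hQ B'Q) _ XB'.
  apply: (hpart_same h0 hQ B'Q BQ XB' CB).
  by rewrite (setIidPl (in_carrier XG)) (nonempty_of_notin h0 XG).
have BG : B = G.
  apply/eqP; rewrite eqEsubset (hpart_sub hQ BQ); apply/subsetP => X XG.
  by have [B' B'Q XB'] := hpart_block hQ XG; rewrite -(allB _ B'Q).
apply/setP => C; rewrite inE; apply/idP/eqP => [CQ|->]; first by rewrite (allB _ CQ).
by rewrite -BG.
Qed.

Lemma ConnInv {T : finType} (G : {set {set T}}) :
  saturated G -> set0 \notin G -> G != set0 -> connected G -> carrier G \in G.
Proof.
move=> sat h0 neG [P [_ uP]].
apply/negPn/negP => nV.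
have [X XG] := set0Pn _ neG.
have [M hM sXM] := maxe_ex XG.
have [MG mx] := maxeP _ _ hM.
set A := restr G M; set B := G :\: A.
have AG : A \subset G by apply: restr_sub.
have nAG : A != G.
  apply: contraNneq nV => e.
  have sVM : carrier G \subset M.
    by apply: carrier_sub => Y YG; move: YG; rewrite -e restrE => /andP[].
  have -> : carrier G = M by apply/eqP; rewrite eqEsubset sVM in_carrier.
  done.
have neB : B != set0.
  apply: contraNneq nAG => e; rewrite eqEsubset AG /=.
  apply/subsetP => Y YG; apply/negPn/negP => nY.
  have : Y \in B by rewrite inE nY YG.
  by rewrite e inE.
have MA : M \in A by rewrite restrE MG subxx.
have neA : A != set0 by apply/set0Pn; exists M.
have cAB : [disjoint carrier A & carrier B].
  rewrite -setI_eq0; apply/eqP/setP => x; rewrite !inE; apply/negbTE/negP => /andP[xA xB].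
  have xM := subsetP (carrier_restr_sub G M) _ xA.
  case/carrierP: xB => Y; rewrite inE => /andP[nYA YG] xY.
  move: nYA; rewrite restrE YG /= => /negP; apply.
  by apply: (sat_max sat hM YG); apply/set0Pn; exists x; rewrite inE xY.
have hAB : hpartition G [set A; B].
  split.
    apply/and3P; split.
    - apply/eqP/setP => Y; apply/coverP/idP => [[C]|YG].
        rewrite !inE => /orP[]/eqP-> //; first by rewrite restrE => /andP[].
        by rewrite inE => /andP[].
      case YA: (Y \in A). by exists A; rewrite ?YA // !inE eqxx.
      exists B; first by rewrite !inE eqxx orbT.
      by rewrite inE YA YG.
    - apply/trivIsetP => C D; rewrite !inE => /orP[]/eqP-> /orP[]/eqP->; rewrite ?eqxx // => _.
        by rewrite -setI_eq0 /B; apply/eqP/setP => Y; rewrite !inE; case: (Y \in G); case: (Y \subset M).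
      by rewrite -setI_eq0 /B; apply/eqP/setP => Y; rewrite !inE; case: (Y \in G); case: (Y \subset M).
    - by rewrite !inE negb_or !(eq_sym set0) neA neB.
  move=> Hi Hj; rewrite !inE => /orP[]/eqP-> /orP[]/eqP->; rewrite ?eqxx // => _.
  by rewrite disjoint_sym.
have e1 := uP _ (hpart_one neG).
have e2 := uP _ hAB.
have : A \in [set G] by rewrite e1 -e2 !inE eqxx.
by rewrite inE (negbTE nAG).
Qed.

Lemma block_facts {T : finType} (G : {set {set T}}) P B :
  saturated G -> set0 \notin G -> finest_hpartition G P -> B \in P ->
  carrier B \in maxe G /\ B = restr G (carrier B).
Proof.
move=> sat h0 [hP cP] BP.
have BG := hpart_sub hP BP.
have h0B : set0 \notin B by apply: contra h0; apply: (subsetP BG).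
have satB : saturated B.
  move=> X1 X2 X1B X2B ne.
  have UG := sat _ _ (subsetP BG _ X1B) (subsetP BG _ X2B) ne.
  have [B' B'P UB'] := hpart_block hP UG.
  suff -> : B = B' by [].
  apply: (hpart_same h0 hP BP B'P X1B UB').
  by rewrite (setIidPl (subsetUl _ _)) (nonempty_of_notin h0B X1B).
have CB := ConnInv satB h0B (hpart_ne hP BP) (cP _ BP).
have CG := subsetP BG _ CB.
have neC := nonempty_of_notin h0B CB.
have blk : forall X, X \in G -> X :&: carrier B != set0 -> X \in B.
  move=> X XG ne; have [B' B'P XB'] := hpart_block hP XG.
  by rewrite (hpart_same h0 hP BP B'P CB XB') // setIC.
split.
  apply/maxeP; split => // X XG sCX.
  have XB : X \in B by apply: blk => //; rewrite (setIidPr sCX).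
  by apply/eqP; rewrite eqEsubset sCX in_carrier.
apply/setP => X; rewrite restrE; apply/idP/andP => [XB|[XG sX]].
  by rewrite (subsetP BG) ?in_carrier.
apply: blk => //; rewrite (setIidPl sX); exact: nonempty_of_notin h0 XG.
Qed.

Lemma U_part {T : finType} (G : {set {set T}}) P :
  saturated G -> set0 \notin G -> finest_hpartition G P ->
  P = [set restr G M | M in maxe G].
Proof.
move=> sat h0 hF; apply/setP => B; apply/idP/imsetP => [BP|[M hM ->]].
  have [h1 h2] := block_facts sat h0 hF BP.
  by exists (carrier B).
have [MG _] := maxeP _ _ hM.
have [B' BP MB] := hpart_block hF.1 MG.
have [h1 h2] := block_facts sat h0 hF BP.
suff e : M = carrier B' by rewrite e -h2.
apply: (max_disj sat h0 hM h1).
have := in_carrier MB => s; rewrite (setIidPl s); exact: nonempty_of_notin h0 MG.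
Qed.

Lemma Sub {T : finType} (G J : {set {set T}}) :
  construction G J -> forall X, X \in J -> (X \subset carrier G) && (X != set0).
Proof.
elim => {G J} [|H x K hat hc xC hK IH|H P f hat nc fp c2 hf IH] X.
- by rewrite inE.
- rewrite inE => /orP[XK|]; last first.
    by rewrite inE => /eqP->; rewrite subxx /=; apply/set0Pn; exists x.
  have /andP[s ne] := IH _ XK; rewrite ne andbT.
  exact: subset_trans s (carrierS (restr_sub _ _)).
- case/bigcupP => Hi HiP XHi.
  have /andP[s ne] := IH _ HiP _ XHi; rewrite ne andbT.
  exact: subset_trans s (carrierS (hpart_sub fp.1 HiP)).
Qed.

Lemma constr_set0 {T : finType} (G J : {set {set T}}) :
  construction G J -> G = set0 -> J = set0.
Proof.
case => {G J} [//|H x K hat hc xC hK|H P f hat nc fp c2 hf] e.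
- by move: xC; rewrite e => /carrierP[X]; rewrite inE.
- exfalso; have : 0 < #|P| by apply: leq_trans c2.
  case/card_gt0P => Hi HiP.
  have := hpart_ne fp.1 HiP; have := hpart_sub fp.1 HiP; rewrite e subset0 => /eqP->.
  by rewrite eqxx.
Qed.

Lemma I1 {T : finType} (G J : {set {set T}}) :
  construction G J -> connected G -> G != set0 ->
  exists x J', [/\ x \in carrier G, construction (restr G (carrier G :\ x)) J' &
                   J = J' :|: [set carrier G]].
Proof.
case => {G J} [|H x K hat hc xC hK|H P f hat nc fp c2 hf] cG neG.
- by rewrite eqxx in neG.
- by exists x, K.
- by case: nc.
Qed.

Lemma D {T : finType} (G J : {set {set T}}) :
  construction G J -> saturated G -> set0 \notin G ->
  exists f : {set T} -> {set {set T}},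
    (forall M, M \in maxe G -> construction (restr G M) (f M)) /\
    J = \bigcup_(M in maxe G) f M.
Proof.
case => {G J} [|H x K hat hc xC hK|H P f hat nc fp c2 hf] sat h0.
- exists (fun _ => set0); split.
    by move=> M /maxeP[]; rewrite inE.
  apply/setP => X; rewrite inE; apply/esym/negbTE/negP => /bigcupP[M /maxeP[]]; by rewrite inE.
- have neH : H != set0 by apply/set0Pn; case/carrierP: xC => X XH _; exists X.
  have VH := ConnInv sat h0 neH hc.
  have mV : maxe H = [set carrier H].
    apply/setP => M; rewrite in_set1; apply/idP/eqP => [hM|->].
      have [MH mx] := maxeP _ _ hM; by rewrite (mx _ VH (in_carrier MH)).
    apply/maxeP; split => // X XH sVX; apply/eqP; rewrite eqEsubset sVX in_carrier //.
  have rV : restr H (carrier H) = H.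
    by apply/setP => X; rewrite restrE; case XH: (X \in H); rewrite /= ?(in_carrier XH).
  exists (fun _ => K :|: [set carrier H]); split.
    move=> M; rewrite mV in_set1 => /eqP->; rewrite rV; exact: constr1 hK.
  by rewrite mV big_set1.
- have eP := U_part sat h0 fp.
  exists (fun M => f (restr H M)); split.
    by move=> M hM; apply: hf; rewrite eP; apply: imset_f.
  apply/setP => X; apply/bigcupP/bigcupP => [[Hi HiP XHi]|[M hM XM]].
    by move: HiP; rewrite eP => /imsetP[M hM e]; exists M => //; rewrite -e.
  by exists (restr H M) => //; rewrite eP; apply: imset_f.
Qed.

Lemma carrier_restr_in {T : finType} (G : {set {set T}}) (M : {set T}) :
  M \in G -> carrier (restr G M) = M.
Proof.
move=> MG; apply/eqP; rewrite eqEsubset carrier_restr_sub in_carrier //.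
by rewrite restrE MG subxx.
Qed.

Lemma max_disj2 {T : finType} (G : {set {set T}}) M M' :
  saturated G -> set0 \notin G -> M \in maxe G -> M' \in maxe G -> M != M' -> M :&: M' = set0.
Proof.
move=> sat h0 hM hM' ne; apply/eqP; apply: contraNT ne => ne'.
by rewrite (max_disj sat h0 hM hM' ne').
Qed.

Lemma Cmp {T : finType} (H : {set {set T}}) (g : {set T} -> {set {set T}}) :
  atomic H -> saturated H -> set0 \notin H -> carrier H \notin H -> H != set0 ->
  (forall M, M \in maxe H -> construction (restr H M) (g M)) ->
  construction H (\bigcup_(M in maxe H) g M).
Proof.
move=> hat sat h0 nV neH hg.
set P := [set restr H M | M in maxe H].
have cm : forall M, M \in maxe H -> carrier (restr H M) = M.
  by move=> M /maxeP[MG _]; apply: carrier_restr_in.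
have dis : forall M M', M \in maxe H -> M' \in maxe H -> restr H M != restr H M' ->
    [disjoint carrier (restr H M) & carrier (restr H M')].
  move=> M M' hM hM' ne; rewrite cm // cm // -setI_eq0; apply/eqP.
  apply: (max_disj2 sat h0 hM hM'); apply: contraNneq ne => ->; exact: eqxx.
have fp : finest_hpartition H P.
  split; last first.
    move=> Hi /imsetP[M hM ->]; apply: Conn; first exact: h0_restr.
    by rewrite cm // restrE subxx andbT; case/maxeP: hM.
  split; last first.
    by move=> Hi Hj /imsetP[M hM ->] /imsetP[M' hM' ->]; apply: dis.
  apply/and3P; split.
  - apply/eqP/setP => X; apply/coverP/idP => [[B /imsetP[M hM ->]]|XH].
      by rewrite restrE => /andP[].
    have [M hM sXM] := maxe_ex XH.
    by exists (restr H M); [apply: imset_f | rewrite restrE XH].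
  - apply/trivIsetP => Hi Hj /imsetP[M hM ->] /imsetP[M' hM' ->] ne.
    rewrite -setI_eq0; apply/eqP/setP => X; rewrite inE [X \in set0]inE.
    apply/negbTE/negP => /andP[XM XM'].
    have := dis _ _ hM hM' ne; rewrite -setI_eq0 => /eqP e.
    have XH : X \in H by move: XM; rewrite restrE => /andP[].
    have /set0Pn[x xX] := nonempty_of_notin h0 XH.
    have : x \in carrier (restr H M) :&: carrier (restr H M').
      by rewrite inE (subsetP (in_carrier XM)) // (subsetP (in_carrier XM')).
    by rewrite e inE.
  - apply/imsetP => -[M hM e].
    have : M \in restr H M by rewrite restrE subxx andbT; case/maxeP: hM.
    by rewrite -e inE.
have nc : ~ connected H by move=> c; move: nV; rewrite (ConnInv sat h0 neH c).
have c2 : 1 < #|P|.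
  have [X XH] := set0Pn _ neH.
  have [M1 h1 _] := maxe_ex XH.
  have [M1H _] := maxeP _ _ h1.
  have : M1 \proper carrier H.
    rewrite properEneq in_carrier // andbT; apply: contraNneq nV => <-; done.
  case/properP => _ [x xV xM1].
  have [M2 h2 sxM2] := maxe_ex (hat _ xV).
  have ne : restr H M1 != restr H M2.
    apply: contraNneq xM1 => e.
    have := cm _ h2; rewrite -e (cm _ h1) => ->.
    by rewrite -sub1set.
  rewrite (cardsD1 (restr H M1)) imset_f // add1n ltnS card_gt0.
  by apply/set0Pn; exists (restr H M2); rewrite !inE eq_sym ne imset_f.
have := constr2 hat nc fp c2 (f := fun Hi => g (carrier Hi)).
have hf : forall Hi, Hi \in P -> construction Hi (g (carrier Hi)).
  by move=> Hi /imsetP[M hM ->]; rewrite cm //; apply: hg.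
move/(_ hf).
suff -> : \bigcup_(Hi in P) g (carrier Hi) = \bigcup_(M in maxe H) g M by [].
apply/setP => X; apply/bigcupP/bigcupP => [[Hi /imsetP[M hM ->] XM]|[M hM XM]].
  by exists M => //; rewrite -(cm _ hM).
by exists (restr H M); [apply: imset_f | rewrite cm].
Qed.

Lemma outside {T : finType} (H : {set {set T}}) (M M0 Y : {set T}) :
  M \in H -> M :&: M0 = set0 -> Y \subset M0 -> M \subset carrier H :\: Y.
Proof.
move=> MH dis sY; apply/subsetP => x xM; rewrite inE (subsetP (in_carrier MH)) // andbT.
apply/negP => xY; have : x \in M :&: M0 by rewrite inE xM (subsetP sY).
by rewrite dis inE.
Qed.

Lemma meet_ne {T : finType} (A B C : {set T}) : A \subset B -> A \subset C -> A != set0 ->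
  B :&: C != set0.
Proof.
move=> sB sC /set0Pn[x xA]; apply/set0Pn; exists x; by rewrite inE (subsetP sB) ?(subsetP sC).
Qed.

Lemma partA {T : finType} (H : {set {set T}}) (M M0 Y : {set T}) :
  saturated H -> set0 \notin H -> M0 \in maxe H -> Y \subset M0 ->
  M \in maxe H -> M != M0 ->
  M \in maxe (trace (carrier H :\: Y) H) /\
  restr (trace (carrier H :\: Y) H) M = restr H M.
Proof.
move=> sat h0 h0M sY hM ne.
have [MH mxM] := maxeP _ _ hM.
have dis := max_disj2 sat h0 hM h0M ne.
have sMZ := outside MH dis sY.
have neM := nonempty_of_notin h0 MH.
have MG : M \in trace (carrier H :\: Y) H.
  by apply/traceP; exists M => //; rewrite (setIidPl sMZ) neM eqxx.
split.
  apply/maxeP; split => // W /traceP[X XH /andP[nX /eqP ->]] sMW.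
  have sXM : X \subset M.
    apply: (sat_max sat hM XH); apply: (meet_ne (A:=M)) => //.
    exact: subset_trans sMW (subsetIl _ _).
  apply/eqP; rewrite eqEsubset sMW andbT; exact: subset_trans (subsetIl _ _) sXM.
apply/setP => W; rewrite !restrE; apply/andP/andP => [[/traceP[X XH /andP[nX /eqP eW]] sWM]|[WH sWM]].
  have sXM : X \subset M.
    apply: (sat_max sat hM XH); apply: (meet_ne (A:=W)) => //; last by rewrite eW.
    by rewrite eW subsetIl.
  by rewrite eW (setIidPl (subset_trans sXM sMZ)) XH.
split => //; apply/traceP; exists W => //.
have sWZ := subset_trans sWM sMZ.
by rewrite (setIidPl sWZ) eqxx (nonempty_of_notin h0 WH).
Qed.

Lemma partB {T : finType} (H : {set {set T}}) (M0 Y : {set T}) :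
  saturated H -> set0 \notin H -> M0 \in maxe H -> Y \subset M0 ->
  M0 :&: (carrier H :\: Y) != set0 ->
  M0 :&: (carrier H :\: Y) \in maxe (trace (carrier H :\: Y) H) /\
  restr (trace (carrier H :\: Y) H) (M0 :&: (carrier H :\: Y)) =
    trace (M0 :\: Y) (restr H M0).
Proof.
move=> sat h0 h0M sY ne.
set Z := carrier H :\: Y; set N0 := M0 :&: Z.
have [M0H mx0] := maxeP _ _ h0M.
have eN : M0 :\: Y = N0 by rewrite /N0 /Z setIDA (setIidPl (in_carrier M0H)).
rewrite eN.
have NG : N0 \in trace Z H by apply/traceP; exists M0 => //; rewrite ne eqxx.
split.
  apply/maxeP; split => // W /traceP[X XH /andP[nX /eqP ->]] sNW.
  have sXM : X \subset M0.
    apply: (sat_max sat h0M XH); apply: (meet_ne (A:=N0)) => //.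
      exact: subset_trans sNW (subsetIl _ _).
    exact: subsetIl.
  by apply/eqP; rewrite eqEsubset sNW andbT setSI.
apply/setP => W; rewrite !restrE; apply/andP/idP => [[/traceP[X XH /andP[nX /eqP eW]] sWN]|].
  have sXM : X \subset M0.
    apply: (sat_max sat h0M XH); apply: (meet_ne (A:=W)) => //; last by rewrite eW.
      by rewrite eW subsetIl.
    exact: subset_trans sWN (subsetIl _ _).
  apply/traceP; exists X; first by rewrite restrE XH.
  by rewrite /N0 setIA (setIidPl sXM) -eW eqxx andbT eW.
case/traceP => X; rewrite restrE => /andP[XH sXM] /andP[nX /eqP eW].
have e2 : X :&: N0 = X :&: Z by rewrite /N0 setIA (setIidPl sXM).
split; last by rewrite eW subsetIr.
by apply/traceP; exists X => //; rewrite -e2 nX eW e2 eqxx.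
Qed.

Lemma partC {T : finType} (H : {set {set T}}) (M0 Y N : {set T}) :
  saturated H -> set0 \notin H -> M0 \in maxe H -> Y \subset M0 ->
  N \in maxe (trace (carrier H :\: Y) H) ->
  N = M0 :&: (carrier H :\: Y) \/ (N \in maxe H /\ N != M0).
Proof.
move=> sat h0 h0M sY hN.
set Z := carrier H :\: Y.
have [NG mxN] := maxeP _ _ hN.
have neN : N != set0 := nonempty_of_notin (h0_trace _ _) NG.
case/traceP: NG => X XH /andP[nX /eqP eN].
have [M hM sXM] := maxe_ex XH.
have [MH _] := maxeP _ _ hM.
have sNMZ : N \subset M :&: Z by rewrite eN setSI.
have MZG : M :&: Z \in trace Z H.
  apply/traceP; exists M => //; rewrite eqxx andbT.
  by apply: contraNneq neN => e; move: sNMZ; rewrite e subset0.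
have eNM : N = M :&: Z by apply/esym; apply: mxN.
case: (eqVneq M M0) => [eM|neM]; first by left; rewrite eNM eM.
right; have dis := max_disj2 sat h0 hM h0M neM.
have sMZ := outside MH dis sY.
by rewrite eNM (setIidPl sMZ) hM neM.
Qed.

Lemma Disc {T : finType} (H : {set {set T}}) (Y : {set T}) (K J : {set {set T}}) :
  atomic H -> saturated H -> set0 \notin H -> carrier H \notin H -> Y \in H ->
  (forall M, M \in maxe H -> Y \subset M -> forall J',
     construction (trace (M :\: Y) (restr H M)) J' ->
     construction (restr H M) (K :|: [set cupH (restr H M) X Y | X in J'])) ->
  construction (trace (carrier H :\: Y) H) J ->
  construction H (K :|: [set cupH H X Y | X in J]).
Proof.
move=> hat sat h0 nV YH IHd hJ.
have neH : H != set0 by apply/set0Pn; exists Y.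
have [M0 h0M sY] := maxe_ex YH.
have [M0H _] := maxeP _ _ h0M.
set Z := carrier H :\: Y.
have [f [hf eJ]] := D hJ (@sat_trace _ H Z sat) (h0_trace _ _).
set N0 := M0 :&: Z.
have eN : M0 :\: Y = N0 by rewrite /N0 /Z setIDA (setIidPl (in_carrier M0H)).
set J0 := if N0 == set0 then set0 else f N0.
have hJ0 : construction (trace (M0 :\: Y) (restr H M0)) J0.
  rewrite /J0; case: eqP => [e|/eqP ne].
    by rewrite eN e trace_set0; apply: constr0.
  have [_ eR] := partB sat h0 h0M sY ne.
  rewrite -eR; apply: hf; exact: (partB sat h0 h0M sY ne).1.
have hM0 := IHd M0 h0M sY J0 hJ0.
pose g := fun M => if M == M0 then K :|: [set cupH (restr H M0) X Y | X in J0] else f M.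
have := Cmp (g:=g) hat sat h0 nV neH.
have hg : forall M, M \in maxe H -> construction (restr H M) (g M).
  move=> M hM; rewrite /g; case: eqP => [->//|/eqP neM].
  have [hMG eR] := partA sat h0 h0M sY hM neM.
  by rewrite -eR; apply: hf.
move/(_ hg).
have cupA : forall M X, M \in maxe H -> M != M0 -> X \in f M -> cupH H X Y = X.
  move=> M X hM neM XfM.
  have [hMG _] := partA sat h0 h0M sY hM neM.
  have /andP[sX neX] := Sub (hf _ hMG) XfM.
  have sXM := subset_trans sX (carrier_restr_sub _ _).
  rewrite /cupH; case: ifP => // UH; exfalso.
  have sUM : X :|: Y \subset M.
    apply: (sat_max sat hM UH); apply: (meet_ne (A:=X)) => //; exact: subsetUl.
  have dis := max_disj2 sat h0 hM h0M neM.
  have := meet_ne (subset_trans (subsetUr X Y) sUM) sY (nonempty_of_notin h0 YH).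
  by rewrite dis eqxx.
have cup0 : forall X, X \in J0 -> cupH (restr H M0) X Y = cupH H X Y.
  move=> X XJ0; have /andP[sX _] := Sub hJ0 XJ0.
  have sXM : X \subset M0.
    apply: subset_trans sX (subset_trans (carrier_trace_sub _ _) (subsetDl _ _)).
  by rewrite /cupH restrE subUset sXM sY /= andbT.
suff -> : K :|: [set cupH H X Y | X in J] = \bigcup_(M in maxe H) g M by [].
apply/setP => W; apply/idP/bigcupP.
  rewrite inE => /orP[WK | /imsetP[X XJ ->]].
    by exists M0 => //; rewrite /g eqxx inE WK.
  move: XJ; rewrite eJ => /bigcupP[N hN XN].
  case: (partC sat h0 h0M sY hN) => [eN'|[hNH neN]].
    have neN0 : N0 != set0.
      by rewrite /N0 /Z -eN'; case/maxeP: hN => NG _; exact: nonempty_of_notin (h0_trace _ _) NG.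
    have XJ0 : X \in J0 by rewrite /J0 (negbTE neN0) /N0 /Z -eN'.
    exists M0 => //; rewrite /g eqxx inE -cup0 //; apply/orP; right; exact: imset_f.
  by exists N => //; rewrite /g (negbTE neN) (cupA N).
case=> M hM; rewrite /g; case: eqP => [_|/eqP neM].
  rewrite inE => /orP[WK|/imsetP[X XJ0 ->]]; first by rewrite inE WK.
  have neN0 : N0 != set0 by apply: contraTneq XJ0 => e; rewrite /J0 e eqxx inE.
  have XfN : X \in f N0 by move: XJ0; rewrite /J0 (negbTE neN0).
  have [hNG _] := partB sat h0 h0M sY neN0.
  rewrite cup0 // inE; apply/orP; right; apply: imset_f.
  by rewrite eJ; apply/bigcupP; exists N0.
move=> WfM; have [hMG _] := partA sat h0 h0M sY hM neM.
rewrite inE; apply/orP; right; apply/imsetP; exists W; last by rewrite (cupA M).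
by rewrite eJ; apply/bigcupP; exists M.
Qed.

Lemma keyI {T : finType} (X A B Y : {set T}) :
  X \subset A -> A \subset B -> X :&: (A :\: Y) = X :&: (B :\: Y).
Proof. by move=> sXA sAB; rewrite !setIDA (setIidPl sXA) (setIidPl (subset_trans sXA sAB)). Qed.

Lemma tr_eq {T : finType} (H : {set {set T}}) (Y : {set T}) z :
  z \in carrier H :\: Y ->
  trace ((carrier H :\ z) :\: Y) (restr H (carrier H :\ z)) =
  restr (trace (carrier H :\: Y) H) ((carrier H :\: Y) :\ z).
Proof.
move=> zZ; set V := carrier H.
apply/setP => W; rewrite restrE; apply/traceP/andP.
  case=> X; rewrite restrE => /andP[XH sX] /andP[nX /eqP eW].
  have key := keyI Y sX (subsetDl V [set z]).
  split.
    by apply/traceP; exists X => //; rewrite -key nX eW eqxx.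
  rewrite eW; apply: subset_trans (subsetIr _ _) _.
  by apply/subsetP => x; rewrite !inE => /andP[-> /andP[-> ->]].
case=> /traceP[X XH /andP[nX /eqP eW]] sW.
have sX : X \subset V :\ z.
  apply/subsetP => x xX; rewrite inE (subsetP (in_carrier XH)) // andbT.
  apply/negP; rewrite in_set1 => /eqP exz; subst x.
  have : z \in W by rewrite eW inE xX zZ.
  by move/(subsetP sW); rewrite !inE eqxx.
have key := keyI Y sX (subsetDl V [set z]).
by exists X; rewrite ?restrE ?XH ?sX // key nX eW eqxx.
Qed.

Lemma restr_all {T : finType} (H : {set {set T}}) (A : {set T}) :
  carrier H \subset A -> restr H A = H.
Proof.
move=> s; apply/setP => X; rewrite restrE; case XH: (X \in H) => //=.
exact: subset_trans (in_carrier XH) s.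
Qed.

Lemma Main {T : finType} n (H : {set {set T}}) :
  #|carrier H| <= n -> atomic H -> saturated H -> set0 \notin H ->
  forall Y K J, Y \in H -> construction (restr H Y) K ->
  construction (trace (carrier H :\: Y) H) J ->
  construction H (K :|: [set cupH H X Y | X in J]).
Proof.
elim: n H => [|n IH] H hc hat sat h0 Y K J YH hK hJ.
  exfalso; move: hc; rewrite leqn0 cards_eq0 => /eqP e.
  have := in_carrier YH; rewrite e subset0 => /eqP eY.
  by move: h0; rewrite -eY YH.
have sYV := in_carrier YH.
case: (boolP (carrier H \in H)) => VH; last first.
  apply: Disc => // M hM sYM J' hJ'.
  have [MH _] := maxeP _ _ hM.
  have cM := carrier_restr_in MH.
  apply: (IH (restr H M)) => //.
  - rewrite cM; rewrite -ltnS; apply: leq_trans hc; apply: proper_card.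
    by rewrite properEneq in_carrier // andbT; apply: contraNneq VH => <-.
  - exact: atomic_restr.
  - exact: sat_restr.
  - exact: h0_restr.
  - by rewrite restrE YH.
  - by rewrite restr_restr.
  - by rewrite cM.
set V := carrier H; set Z := V :\: Y.
case: (eqVneq Z set0) => Z0.
  have eJ : J = set0 by apply: (constr_set0 hJ); rewrite -/V -/Z Z0 trace_set0.
  rewrite eJ imset0 setU0.
  have sVY : V \subset Y by rewrite -setD_eq0 -/Z Z0.
  by move: hK; rewrite (restr_all sVY).
have sZV : Z \subset V := subsetDl _ _.
have ZG : Z \in trace Z H by apply/traceP; exists V => //; rewrite (setIidPr sZV) Z0 eqxx.
have cG : carrier (trace Z H) = Z.
  by apply/eqP; rewrite eqEsubset carrier_trace_sub in_carrier.
have neG : trace Z H != set0 by apply/set0Pn; exists Z.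
have cnG : connected (trace Z H) by apply: Conn; rewrite ?h0_trace ?cG.
have [z [J' [zC hJ' eJ]]] := I1 hJ cnG neG.
rewrite cG in zC hJ' eJ.
set H' := restr H (V :\ z).
have zV : z \in V := subsetP sZV _ zC.
have cH' : carrier H' = V :\ z by rewrite carrier_restr // (setIidPl (subsetDl _ _)).
have sYVz : Y \subset V :\ z.
  apply/subsetP => y yY; rewrite !inE (subsetP sYV) // andbT.
  by apply: contraTneq zC => eyz; rewrite /Z inE -eyz yY.
have hH' : construction H' (K :|: [set cupH H' X Y | X in J']).
  apply: (IH H' _ (@atomic_restr _ H (V :\ z) hat) (@sat_restr _ H (V :\ z) sat) (@h0_restr _ H (V :\ z) h0) Y K J').
  - rewrite cH' -ltnS; apply: leq_trans hc; rewrite (cardsD1 z V) zV.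
    by [].
  - by rewrite /H' restrE YH sYVz.
  - by rewrite /H' restr_restr.
  - by rewrite cH' /H' tr_eq.
have := constr1 hat (Conn h0 VH) zV hH'.
suff -> : K :|: [set cupH H X Y | X in J] =
          K :|: [set cupH H' X Y | X in J'] :|: [set carrier H] by [].
rewrite eJ imsetU imset_set1 setUA.
have -> : cupH H Z Y = V.
  have e : Z :|: Y = V.
    apply/setP => x; rewrite /Z !inE; case xY: (x \in Y); rewrite /= ?orbF //.
    by rewrite (subsetP sYV _ xY).
  by rewrite /cupH e VH.
congr (_ :|: _ :|: _).
apply: eq_in_imset => X XJ'.
have /andP[sX _] := Sub hJ' XJ'.
have sXz : X \subset V :\ z.
  apply: subset_trans sX (subset_trans (carrier_restr_sub _ _) _).
  by apply/subsetP => x; rewrite !inE => /andP[-> /andP[_ ->]].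
by rewrite /cupH /H' restrE subUset sXz sYVz /= andbT.
Qed.

Theorem proposition7p5 (T : finType) (H : {set {set T}}) (Y : {set T})
    (K J : {set {set T}}) :
  ASC H -> Y \in H ->
  construction (restr H Y) K ->
  construction (trace (carrier H :\: Y) H) J ->
  construction H (K :|: [set cupH H X Y | X in J]).
Proof.
case=> h0 [hat [sat _]] YH hK hJ.
exact: (Main (leqnn _) hat sat h0 YH hK hJ).
Qed.
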